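(* Let $N\ge2$ and $0=x_0<x_1<\dots<x_N=1$, $I=[0,1]$, $I_i=[x_{i-1},x_i]$, $|I_i|=x_i-x_{i-1}$, $L_i(x)=x_{i-1}+|I_i|x$ for $i=1,\dots,N$. Let $\alpha_i,\beta_i,\gamma_i$ be reals with $|\alpha_i|<1$ and $|\beta_i|+|\gamma_i|<1$, let $p_i\in\mathrm{Lip}\,\lambda_i$ and $q_i\in\mathrm{Lip}\,\mu_i$ with $0<\lambda_i,\mu_i\le1$, and let $f_1,f_2:I\to\mathbb{R}$ be continuous with $f_1(L_i(x))=\alpha_if_1(x)+\beta_if_2(x)+p_i(x)$ and $f_2(L_i(x))=\gamma_if_2(x)+q_i(x)$ for all $x\in I$, $i=1,\dots,N$. Put $\lambda=\min_i\lambda_i$, $\mu=\min_i\mu_i$, $\Omega=\max_i |\alpha_i|/|I_i|^{\lambda}$, $\Gamma=\max_i|\gamma_i|/|I_i|^{\mu}$, $\Theta=\max_i|\alpha_i|/|I_i|^{\mu}$, and suppose $\Theta>1$. Then: (a) if $\Omega\ne1$ and $\Gamma\ne1$, there is $\delta\in(0,1]$ with $f_1\in\mathrm{Lip}\,\delta$; (b) if $\Omega=1$ or $\Gamma=1$, there is $\delta\in(0,1]$ with $\omega(f_1,t)=O(|t|^{\delta}\log|t|)$ as $t\to0$.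
   Context: $\mathrm{Lip}\,\delta$ denotes the class of functions $g$ on $I$ such that $|g(x)-g(y)|\le C|x-y|^{\delta}$ for some constant $C$ and all $x,y\in I$. $\omega(f_1,t)=\sup\{|f_1(x)-f_1(y)|: x,y\in I,\ |x-y|\le |t|\}$ is the modulus of continuity. The function $f_1$ is the coalescence hidden variable fractal interpolation function (CHFIF): $(f_1,f_2)$ is the continuous function whose graph is the attractor of the IFS $\omega_i(x,y,z)=(L_i(x),\alpha_iy+\beta_iz+p_i(x),\gamma_iz+q_i(x))$. *)

(* Defs.v *)
From Stdlib Require Import Reals.
From Coquelicot Require Import Coquelicot.
Open Scope R_scope.

Definition inI (x : R) : Prop := 0 <= x <= 1.

(* a^d for a >= 0, with the convention 0^d = 0 (d > 0) *)
Definition rpow (a d : R) : R := if Rlt_dec 0 a then Rpower a d else 0.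

Definition Lip (d : R) (g : R -> R) : Prop :=
  exists C : R, forall x y, inI x -> inI y ->
    Rabs (g x - g y) <= C * rpow (Rabs (x - y)) d.

Definition continuous_on_I (g : R -> R) : Prop :=
  forall x, inI x -> forall eps, 0 < eps -> exists d, 0 < d /\
    forall y, inI y -> Rabs (y - x) < d -> Rabs (g y - g x) < eps.

Definition modulus (g : R -> R) (t : R) : Rbar :=
  Lub_Rbar (fun r => exists x y, inI x /\ inI y /\ Rabs (x - y) <= Rabs t
                                  /\ r = Rabs (g x - g y)).

Fixpoint rmax_to (g : nat -> R) (n : nat) : R :=
  match n with O => g O | S m => Rmax (rmax_to g m) (g n) end.
Fixpoint rmin_to (g : nat -> R) (n : nat) : R :=
  match n with O => g O | S m => Rmin (rmin_to g m) (g n) end.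

(* max / min over i = 1..N (N >= 1) *)
Definition max1N (N : nat) (g : nat -> R) : R := rmax_to (fun k => g (S k)) (N - 1).
Definition min1N (N : nat) (g : nat -> R) : R := rmin_to (fun k => g (S k)) (N - 1).

Definition len (x : nat -> R) (i : nat) : R := x i - x (pred i).
Definition Lmap (x : nat -> R) (i : nat) (t : R) : R := x (pred i) + len x i * t.

(* Main.v *)
Require Import Defs.
From Stdlib Require Import Reals Lra Lia Psatz Classical.
From Coquelicot Require Import Coquelicot.
Open Scope R_scope.

Lemma rpow_nonneg a d : 0 <= rpow a d.
Proof. unfold rpow, Rpower. destruct Rlt_dec; [left; apply exp_pos | lra]. Qed.

Lemma rpow_pos a d : 0 < a -> rpow a d = Rpower a d.
Proof. intro H; unfold rpow; destruct Rlt_dec; [reflexivity | lra]. Qed.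

Lemma rpow_le_base r r' d : 0 <= r <= r' -> 0 <= d -> rpow r d <= rpow r' d.
Proof.
  intros [H1 H2] Hd. destruct (Req_dec r 0) as [->|Hr].
  - unfold rpow at 1. destruct Rlt_dec; [lra|]. apply rpow_nonneg.
  - rewrite !rpow_pos by lra. apply Rle_Rpower_l; lra.
Qed.

Lemma rpow_le_exp r d d' : 0 <= r <= 1 -> 0 < d' <= d -> rpow r d <= rpow r d'.
Proof.
  intros [H1 H2] Hd. destruct (Req_dec r 0) as [->|Hr].
  - unfold rpow. destruct Rlt_dec; lra.
  - rewrite !rpow_pos by lra. unfold Rpower. 
    destruct (Req_dec r 1) as [->|H1'].
    + rewrite ln_1. rewrite !Rmult_0_r. lra.
    + assert (ln r < 0) by (rewrite <- ln_1; apply ln_increasing; lra).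
      destruct (Rle_lt_or_eq_dec _ _ (proj2 Hd)) as [Hlt|Heq].
      * left. apply exp_increasing. nra.
      * subst. lra.
Qed.

Lemma Rpower_pow_gen l e n : 0 < l -> Rpower (l ^ n) e = (Rpower l e) ^ n.
Proof.
  intro Hl. assert (Hp : 0 < Rpower l e) by (unfold Rpower; apply exp_pos).
  rewrite <- (Rpower_pow n (Rpower l e) Hp).
  unfold Rpower. rewrite ln_pow by lra. rewrite ln_exp. f_equal. ring.
Qed.

Lemma rpow_pow_bound r l e n : 0 < l -> 0 < e -> 0 <= r <= l ^ n ->
  rpow r e <= (Rpower l e) ^ n.
Proof.
  intros Hl He Hr. rewrite <- Rpower_pow_gen by lra.
  rewrite <- (rpow_pos (l ^ n)) by (apply pow_lt; lra).
  apply rpow_le_base; lra.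
Qed.

Lemma fin_up (N : nat) (P : nat -> R -> Prop) :
  (forall i c c', P i c -> c <= c' -> P i c') ->
  (forall i, (1 <= i <= N)%nat -> exists c, P i c) ->
  exists c, forall i, (1 <= i <= N)%nat -> P i c.
Proof.
  intros Hm. induction N as [|N IH]; intros H.
  - exists 0. intros; lia.
  - destruct IH as [c1 Hc1]. { intros; apply H; lia. }
    destruct (H (S N)) as [c2 Hc2]; [lia|].
    exists (Rmax c1 c2). intros i Hi.
    destruct (Nat.eq_dec i (S N)) as [->|Hne].
    + eapply Hm; [exact Hc2| apply Rmax_r].
    + eapply Hm; [apply Hc1; lia | apply Rmax_l].
Qed.

Lemma fin_down (N : nat) (P : nat -> R -> Prop) :
  (forall i c c', P i c -> 0 < c' <= c -> P i c') ->
  (forall i, (1 <= i <= N)%nat -> exists c, 0 < c /\ P i c) ->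
  exists c, 0 < c /\ forall i, (1 <= i <= N)%nat -> P i c.
Proof.
  intros Hm. induction N as [|N IH]; intros H.
  - exists 1. split; [lra|]. intros; lia.
  - destruct IH as [c1 [Hc1p Hc1]]. { intros; apply H; lia. }
    destruct (H (S N)) as [c2 [Hc2p Hc2]]; [lia|].
    exists (Rmin c1 c2). split; [apply Rmin_pos; lra|]. intros i Hi.
    destruct (Nat.eq_dec i (S N)) as [->|Hne].
    + eapply Hm; [exact Hc2| split; [apply Rmin_pos; lra | apply Rmin_r]].
    + eapply Hm; [apply Hc1; lia | split; [apply Rmin_pos; lra | apply Rmin_l]].
Qed.

Definition clamp (c : R) : R := Rmax 0 (Rmin 1 c).

Lemma clamp_lip a b : Rabs (clamp a - clamp b) <= Rabs (a - b).
Proof. unfold clamp, Rmax, Rmin. repeat destruct Rle_dec; unfold Rabs; repeat destruct Rcase_abs; lra. Qed.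

Lemma clamp_id c : inI c -> clamp c = c.
Proof. unfold inI, clamp, Rmax, Rmin; intros; repeat destruct Rle_dec; lra. Qed.

Lemma clamp_in c : inI (clamp c).
Proof. unfold inI, clamp, Rmax, Rmin; repeat destruct Rle_dec; lra. Qed.

Lemma cont_clamp g : continuous_on_I g -> forall c, continuity_pt (fun t => g (clamp t)) c.
Proof.
  intros Hg c. unfold continuity_pt, continue_in, limit1_in, limit_in.
  intros eps Heps. destruct (Hg (clamp c) (clamp_in c) eps Heps) as [d [Hd Hd']].
  exists d. split; [exact Hd|]. intros y [_ Hy]. simpl in *. unfold R_dist in *.
  apply Hd'. apply clamp_in. eapply Rle_lt_trans; [apply clamp_lip|exact Hy].
Qed.

Lemma cont_bounded g : continuous_on_I g -> exists M, forall t, inI t -> Rabs (g t) <= M.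
Proof.
  intros Hg.
  destruct (continuity_ab_maj (fun t => g (clamp t)) 0 1) as [Mx [HM _]]; [lra| intros; apply cont_clamp; auto|].
  destruct (continuity_ab_maj (fun t => - g (clamp t)) 0 1) as [mx [Hm _]]; [lra| intros; apply continuity_pt_opp; apply cont_clamp; auto|].
  exists (Rabs (g (clamp Mx)) + Rabs (g (clamp mx))). intros t Ht.
  specialize (HM t Ht). specialize (Hm t Ht). simpl in *. rewrite clamp_id in HM, Hm by exact Ht.
  pose proof (Rle_abs (g (clamp Mx))). pose proof (Rle_abs (- g (clamp mx))). rewrite Rabs_Ropp in *.
  pose proof (Rabs_pos (g (clamp Mx))). pose proof (Rabs_pos (g (clamp mx))).
  unfold Rabs at 1; destruct Rcase_abs; lra.
Qed.

Lemma exists_level l r : 0 < l < 1 -> 0 < r <= 1 -> exists n, l ^ (S n) < r <= l ^ n.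
Proof.
  intros Hl Hr. destruct (pow_lt_1_zero l) with (y := r) as [m Hm]; [rewrite Rabs_pos_eq; lra | lra |].
  specialize (Hm m (le_n m)). rewrite Rabs_pos_eq in Hm by (apply pow_le; lra).
  clear -Hm Hr Hl. induction m as [|m IH].
  - simpl in Hm. lra.
  - destruct (Rle_dec r (l ^ m)) as [H|H].
    + exists m. split; assumption.
    + apply IH. lra.
Qed.

Lemma x_mono N (x : nat -> R) : (forall i, (i < N)%nat -> x i < x (S i)) ->
  forall i j, (i <= j <= N)%nat -> x i <= x j.
Proof.
  intros H i j [Hij HjN]. induction j as [|j IH].
  - assert (i = 0)%nat by lia. subst; lra.
  - destruct (Nat.eq_dec i (S j)) as [->|Hne]; [lra|].
    assert (x i <= x j) by (apply IH; lia). specialize (H j ltac:(lia)). lra.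
Qed.

Lemma cell_pre (x : nat -> R) i s : 0 < len x i -> x (pred i) <= s <= x i ->
  exists u, inI u /\ Lmap x i u = s /\ s - x (pred i) = len x i * u.
Proof.
  intros Hl Hs. exists ((s - x (pred i)) / len x i).
  assert (E : len x i * ((s - x (pred i)) / len x i) = s - x (pred i)) by (field; lra).
  split; [|split].
  - unfold inI. unfold len in *. split.
    + apply Rdiv_le_0_compat; lra.
    + apply Rmult_le_reg_l with (x i - x (pred i)); [lra|]. unfold len in E. rewrite E. lra.
  - unfold Lmap. rewrite E. ring.
  - lra.
Qed.

Lemma find_cell N (x : nat -> R) s : x 0%nat = 0 -> 0 <= s ->
  forall k, (S k <= N)%nat -> s <= x (S k) ->
  exists i, (1 <= i <= S k)%nat /\ x (pred i) <= s <= x i.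
Proof.
  intros H0 Hs k. induction k as [|k IH]; intros Hk Hsk.
  - exists 1%nat. simpl. split; [lia|]. lra.
  - destruct (Rle_dec (x (S k)) s) as [H|H].
    + exists (S (S k)). simpl. split; [lia|]. lra.
    + destruct IH as [i [Hi Hi']]; [lia|lra|]. exists i. split; [lia|exact Hi'].
Qed.

Lemma abs4 a1 X1 Y1 a2 X2 Y2 : Rabs (a1 * X1 + Y1 + (a2 * X2 + Y2)) <=
  Rabs a1 * Rabs X1 + Rabs Y1 + (Rabs a2 * Rabs X2 + Rabs Y2).
Proof.
  rewrite <- !Rabs_mult. eapply Rle_trans; [apply Rabs_triang|].
  apply Rplus_le_compat; (eapply Rle_trans; [apply Rabs_triang| lra]).
Qed.

Lemma pow_le1' l n : 0 <= l <= 1 -> l ^ n <= 1.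
Proof. intros H. rewrite <- (pow1 n). apply pow_incr. lra. Qed.

Lemma absd a b : Rabs (a - b) <= Rabs a + Rabs b.
Proof. unfold Rabs; repeat destruct Rcase_abs; lra. Qed.

Lemma abs2 a1 X1 Y1 : Rabs (a1 * X1 + Y1) <= Rabs a1 * Rabs X1 + Rabs Y1.
Proof. rewrite <- Rabs_mult. apply Rabs_triang. Qed.

Lemma core (N : nat) (x : nat -> R) (a : nat -> R) (h : nat -> R -> R) (g : R -> R)
  (A l H eta M K rho : R) :
  (2 <= N)%nat -> x 0%nat = 0 -> x N = 1 ->
  (forall i, (i < N)%nat -> x i < x (S i)) ->
  (forall i, (1 <= i <= N)%nat -> Rabs (a i) <= A) ->
  (forall i, (1 <= i <= N)%nat -> l <= len x i) -> 0 < l -> l <= 1 ->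
  (forall i u v, (1 <= i <= N)%nat -> inI u -> inI v ->
      Rabs (h i u - h i v) <= H * rpow (Rabs (u - v)) eta) -> 0 < eta -> 0 <= H ->
  (forall t, inI t -> Rabs (g t) <= M) ->
  (forall i t, (1 <= i <= N)%nat -> inI t -> g (Lmap x i t) = a i * g t + h i t) ->
  0 <= A -> Rpower l eta <= rho -> 2 * H <= K * (rho - A) -> 4 * M <= K -> 0 <= rho ->
  forall n,
   (forall s t, inI s -> inI t -> Rabs (s - t) <= l ^ n -> Rabs (g s - g t) <= K * rho ^ n) /\
   (forall u v, inI u -> inI v -> (1 - u) + v <= l ^ n ->
       Rabs (g u - g 1) + Rabs (g 0 - g v) <= K * rho ^ n).
Proof.
  intros HN H0 H1 Hinc Ha Hl Hlp Hl1 Hh Heta HH HM FE HA Hq HK HKM Hrho.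
  set (q := Rpower l eta) in *.
  assert (Hq0 : 0 <= q) by (unfold q, Rpower; left; apply exp_pos).
  assert (Hmono := x_mono N x Hinc).
  assert (Hlen : forall i, (1 <= i <= N)%nat -> 0 < len x i) by (intros; specialize (Hl i H2); lra).
  assert (HM0 : 0 <= M) by (specialize (HM 0 ltac:(unfold inI; lra)); pose proof (Rabs_pos (g 0)); lra).
  assert (Hhb : forall i u v n, (1 <= i <= N)%nat -> inI u -> inI v -> Rabs (u - v) <= l ^ n ->
            Rabs (h i u - h i v) <= H * q ^ n).
  { intros i u v n Hi Hu Hv Huv. eapply Rle_trans; [apply Hh; auto|].
    apply Rmult_le_compat_l; [lra|]. apply rpow_pow_bound; auto. split; [apply Rabs_pos|exact Huv]. }
  assert (Hstep : forall n X, 0 <= X <= K * rho ^ n ->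
            A * X + 2 * H * q ^ n <= K * rho ^ (S n)).
  { intros n X HX. assert (q ^ n <= rho ^ n) by (apply pow_incr; lra).
    assert (0 <= rho ^ n) by (apply pow_le; lra).
    simpl. nra. }
  induction n as [|n [IHS IHT]].
  - split.
    + intros s t Hs Ht _. simpl. eapply Rle_trans; [apply absd|].
      pose proof (HM s Hs). pose proof (HM t Ht). lra.
    + intros u v Hu Hv _. simpl.
      pose proof (absd (g u) (g 1)). pose proof (absd (g 0) (g v)).
      pose proof (HM u Hu). pose proof (HM v Hv). pose proof (HM 1 ltac:(unfold inI; lra)).
      pose proof (HM 0 ltac:(unfold inI; lra)). lra.
  - assert (HlnS : l ^ S n <= l) by (simpl; assert (l ^ n <= 1) by (apply pow_le1'; lra);
       assert (0 <= l^n) by (apply pow_le; lra); nra).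
    assert (Hln0 : 0 <= l ^ n) by (apply pow_le; lra).
    split.
    + assert (Hord : forall s t, inI s -> inI t -> s <= t -> t - s <= l ^ S n ->
                 Rabs (g s - g t) <= K * rho ^ S n).
      { intros s t Hs Ht Hst Hts.
        destruct (find_cell N x s H0 (proj1 Hs) (pred N)) as [i [Hi Hsi]];
          [lia| replace (S (pred N)) with N by lia; unfold inI in Hs; lra|].
        replace (S (pred N)) with N in Hi by lia.
        destruct (cell_pre x i s (Hlen i Hi) Hsi) as [u [Hu [Lu Eu]]].
        pose proof (Hl i Hi) as Hli.
        destruct (Rle_dec t (x i)) as [Hti|Hti].
        * destruct (cell_pre x i t (Hlen i Hi) ltac:(lra)) as [v [Hv [Lv Ev]]].
          assert (Huv : Rabs (u - v) <= l ^ n).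
          { rewrite Rabs_minus_sym, Rabs_pos_eq by nra. simpl in Hts. nra. }
          rewrite <- Lu, <- Lv, !FE by auto.
          replace (a i * g u + h i u - (a i * g v + h i v)) with (a i * (g u - g v) + (h i u - h i v)) by ring.
          eapply Rle_trans; [apply abs2|].
          pose proof (IHS u v Hu Hv Huv). pose proof (Hhb i u v n Hi Hu Hv Huv).
          pose proof (Ha i Hi). pose proof (Rabs_pos (g u - g v)). pose proof (Rabs_pos (a i)).
          pose proof (Hstep n (Rabs (g u - g v)) ltac:(split; lra)).
          assert (Rabs (a i) * Rabs (g u - g v) <= A * Rabs (g u - g v)) by nra.
          assert (0 <= H * q ^ n) by (apply Rmult_le_pos; [lra| apply pow_le; lra]).
          lra.
        * assert (HiN : (i < N)%nat).
          { destruct (Nat.eq_dec i N) as [->|]; [|lia]. unfold inI in Ht. lra. }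
          set (j := S i). assert (Hj : (1 <= j <= N)%nat) by (unfold j; lia).
          pose proof (Hl j Hj) as Hlj.
          assert (Hxj : x (pred j) = x i) by reflexivity.
          assert (Htj : x (pred j) <= t <= x j).
          { rewrite Hxj. split; [lra|]. unfold len in Hlj. rewrite Hxj in Hlj. lra. }
          destruct (cell_pre x j t (Hlen j Hj) Htj) as [v [Hv [Lv Ev]]].
          rewrite Hxj in Ev.
          assert (Hu1 : Rabs (u - 1) <= l ^ n /\ Rabs (0 - v) <= l ^ n /\ (1 - u) + v <= l ^ n).
          { unfold inI in Hu, Hv. rewrite Rabs_minus_sym, Rabs_pos_eq by lra.
            rewrite Rabs_minus_sym, Rminus_0_r, Rabs_pos_eq by lra.
            assert (E1 : x i - s = len x i * (1 - u)) by (unfold len in *; nra).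
            simpl in Hts. nra. }
          destruct Hu1 as [Hu1 [Hv0 Huv]].
          assert (Li1 : Lmap x i 1 = x i) by (unfold Lmap, len; ring).
          assert (Lj0 : Lmap x j 0 = x i) by (unfold Lmap; rewrite Hxj; ring).
          assert (I1 : inI 1) by (unfold inI; lra). assert (I0 : inI 0) by (unfold inI; lra).
          replace (g s - g t) with ((g s - g (Lmap x i 1)) + (g (Lmap x j 0) - g t))
            by (rewrite Li1, Lj0; ring).
          rewrite <- Lu, <- Lv, !FE by auto.
          replace (a i * g u + h i u - (a i * g 1 + h i 1) + (a j * g 0 + h j 0 - (a j * g v + h j v)))
            with (a i * (g u - g 1) + (h i u - h i 1) + (a j * (g 0 - g v) + (h j 0 - h j v))) by ring.
          eapply Rle_trans; [apply abs4|].
          pose proof (IHT u v Hu Hv Huv).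
          pose proof (Hhb i u 1 n Hi Hu I1 Hu1). pose proof (Hhb j 0 v n Hj I0 Hv Hv0).
          pose proof (Ha i Hi). pose proof (Ha j Hj).
          pose proof (Rabs_pos (g u - g 1)). pose proof (Rabs_pos (g 0 - g v)).
          pose proof (Rabs_pos (a i)). pose proof (Rabs_pos (a j)).
          pose proof (Hstep n (Rabs (g u - g 1) + Rabs (g 0 - g v)) ltac:(split; lra)).
          assert (Rabs (a i) * Rabs (g u - g 1) <= A * Rabs (g u - g 1)) by nra.
          assert (Rabs (a j) * Rabs (g 0 - g v) <= A * Rabs (g 0 - g v)) by nra.
          lra. }
      intros s t Hs Ht Hst. destruct (Rle_dec s t) as [Hle|Hle].
      * apply Hord; auto. rewrite Rabs_minus_sym, Rabs_pos_eq in Hst by lra. exact Hst.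
      * rewrite Rabs_minus_sym. apply Hord; auto; [lra|]. rewrite Rabs_pos_eq in Hst by lra. exact Hst.
    + intros u v Hu Hv Huv.
      unfold inI in Hu, Hv.
      assert (HN1 : (1 <= N <= N)%nat) by lia. assert (H11 : (1 <= 1 <= N)%nat) by lia.
      pose proof (Hl N HN1) as HlN. pose proof (Hl 1%nat H11) as Hl1'.
      assert (Hup : x (pred N) <= u <= x N).
      { unfold len in HlN. rewrite H1 in *. lra. }
      destruct (cell_pre x N u (Hlen N HN1) Hup) as [u' [Hu' [Lu Eu]]].
      assert (Hvp : x (pred 1%nat) <= v <= x 1%nat).
      { unfold len in Hl1'. simpl in *. rewrite H0 in *. lra. }
      destruct (cell_pre x 1%nat v (Hlen 1%nat H11) Hvp) as [v' [Hv' [Lv Ev]]].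
      simpl in Ev. rewrite H0 in Ev.
      assert (E1 : 1 - u = len x N * (1 - u')) by (unfold len in *; rewrite H1 in *; nra).
      assert (Hb : Rabs (u' - 1) <= l ^ n /\ Rabs (0 - v') <= l ^ n).
      { unfold inI in Hu', Hv'. rewrite Rabs_minus_sym, Rabs_pos_eq by lra.
        rewrite Rabs_minus_sym, Rminus_0_r, Rabs_pos_eq by lra.
        simpl in Huv. nra. }
      destruct Hb as [Hu1 Hv0].
      assert (Hb2 : (1 - u') + v' <= l ^ n) by (unfold inI in Hu', Hv'; simpl in Huv; nra).
      assert (LN1 : Lmap x N 1 = 1) by (unfold Lmap, len; rewrite H1; ring).
      assert (L10 : Lmap x 1%nat 0 = 0) by (unfold Lmap; simpl; rewrite H0; ring).
      assert (I1 : inI 1) by (unfold inI; lra). assert (I0 : inI 0) by (unfold inI; lra).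
      replace (g 1) with (g (Lmap x N 1)) by (rewrite LN1; reflexivity).
      replace (g 0) with (g (Lmap x 1%nat 0)) by (rewrite L10; reflexivity).
      rewrite <- Lu, <- Lv, !FE by auto.
      replace (a N * g u' + h N u' - (a N * g 1 + h N 1)) with (a N * (g u' - g 1) + (h N u' - h N 1)) by ring.
      replace (a 1%nat * g 0 + h 1%nat 0 - (a 1%nat * g v' + h 1%nat v'))
        with (a 1%nat * (g 0 - g v') + (h 1%nat 0 - h 1%nat v')) by ring.
      pose proof (abs2 (a N) (g u' - g 1) (h N u' - h N 1)).
      pose proof (abs2 (a 1%nat) (g 0 - g v') (h 1%nat 0 - h 1%nat v')).
      pose proof (IHT u' v' Hu' Hv' Hb2).
      pose proof (Hhb N u' 1 n HN1 Hu' I1 Hu1). pose proof (Hhb 1%nat 0 v' n H11 I0 Hv' Hv0).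
      pose proof (Ha N HN1). pose proof (Ha 1%nat H11).
      pose proof (Rabs_pos (g u' - g 1)). pose proof (Rabs_pos (g 0 - g v')).
      pose proof (Rabs_pos (a N)). pose proof (Rabs_pos (a 1%nat)).
      pose proof (Hstep n (Rabs (g u' - g 1) + Rabs (g 0 - g v')) ltac:(split; lra)).
      assert (Rabs (a N) * Rabs (g u' - g 1) <= A * Rabs (g u' - g 1)) by nra.
      assert (Rabs (a 1%nat) * Rabs (g 0 - g v') <= A * Rabs (g 0 - g v')) by nra.
      lra.
Qed.

Lemma ln_neg r : 0 < r < 1 -> ln r < 0.
Proof. intros. rewrite <- ln_1. apply ln_increasing; lra. Qed.

Lemma holder_fix (N : nat) (x : nat -> R) (a : nat -> R) (h : nat -> R -> R) (g : R -> R) :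
  (2 <= N)%nat -> x 0%nat = 0 -> x N = 1 ->
  (forall i, (i < N)%nat -> x i < x (S i)) ->
  (forall i, (1 <= i <= N)%nat -> Rabs (a i) < 1) ->
  (exists H eta, 0 < eta /\ forall i u v, (1 <= i <= N)%nat -> inI u -> inI v ->
      Rabs (h i u - h i v) <= H * rpow (Rabs (u - v)) eta) ->
  continuous_on_I g ->
  (forall i t, (1 <= i <= N)%nat -> inI t -> g (Lmap x i t) = a i * g t + h i t) ->
  exists delta, 0 < delta <= 1 /\ Lip delta g.
Proof.
  intros HN H0 H1 Hinc Ha [H0' [eta [Heta Hh0]]] Hg FE.
  set (H := Rmax H0' 0).
  assert (HH : 0 <= H) by apply Rmax_r.
  assert (Hh : forall i u v, (1 <= i <= N)%nat -> inI u -> inI v ->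
      Rabs (h i u - h i v) <= H * rpow (Rabs (u - v)) eta).
  { intros. eapply Rle_trans; [apply Hh0; auto|]. apply Rmult_le_compat_r; [apply rpow_nonneg|apply Rmax_l]. }
  destruct (fin_down N (fun i e => Rabs (a i) <= 1 - e)) as [e [He Hae]].
  { intros i c c' Hc Hc'. lra. }
  { intros i Hi. specialize (Ha i Hi). exists (1 - Rabs (a i)). split; lra. }
  set (A := 1 - e).
  destruct (fin_down N (fun i c => c <= len x i)) as [l [Hlp Hl]].
  { intros i c c' Hc Hc'. lra. }
  { intros i Hi. exists (len x i). split; [|lra]. unfold len.
    replace i with (S (pred i)) at 1 by lia.
    assert (x (pred i) < x (S (pred i))) by (apply Hinc; lia). lra. }
  assert (Hmono := x_mono N x Hinc).
  assert (Hl1 : l < 1).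
  { specialize (Hl 1%nat ltac:(lia)). unfold len in Hl. simpl in Hl.
    assert (x 1%nat < x 2%nat) by (apply Hinc; lia).
    assert (x 2%nat <= x N) by (apply Hmono; lia). lra. }
  assert (HA0 : 0 <= A).
  { specialize (Hae 1%nat ltac:(lia)). pose proof (Rabs_pos (a 1%nat)). unfold A. lra. }
  assert (HA1 : A < 1) by (unfold A; lra).
  destruct (cont_bounded g Hg) as [M HM].
  set (q := Rpower l eta).
  assert (Hq1 : 0 < q < 1).
  { unfold q, Rpower. split; [apply exp_pos|]. rewrite <- exp_0. apply exp_increasing.
    pose proof (ln_neg l ltac:(lra)). nra. }
  set (rho := Rmax (Rmax ((1 + A) / 2) q) l).
  assert (Hr1 : (1 + A) / 2 <= rho) by (unfold rho; eapply Rle_trans; [apply Rmax_l|apply Rmax_l]).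
  assert (Hr2 : q <= rho) by (unfold rho; eapply Rle_trans; [apply Rmax_r|apply Rmax_l]).
  assert (Hr3 : l <= rho) by (unfold rho; apply Rmax_r).
  assert (Hr4 : rho < 1).
  { unfold rho. apply Rmax_lub_lt; [apply Rmax_lub_lt|]; lra. }
  set (K := Rmax (4 * M) (4 * H / (1 - A))).
  assert (HK1 : 4 * M <= K) by apply Rmax_l.
  assert (HK2 : 4 * H / (1 - A) <= K) by apply Rmax_r.
  assert (HK : 2 * H <= K * (rho - A)).
  { assert (E : 4 * H / (1 - A) * (1 - A) = 4 * H) by (field; lra).
    assert (0 <= 4 * H / (1 - A)) by (apply Rdiv_le_0_compat; lra). nra. }
  assert (HM0 : 0 <= M) by (specialize (HM 0 ltac:(unfold inI; lra)); pose proof (Rabs_pos (g 0)); lra).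
  assert (HK0 : 0 <= K) by lra.
  assert (Hl1' : l <= 1) by lra. assert (Hrho0' : 0 <= rho) by lra.
  pose proof (fun n => proj1 (core N x a h g A l H eta M K rho HN H0 H1 Hinc Hae Hl Hlp Hl1'
     Hh Heta HH HM FE HA0 Hr2 HK HK1 Hrho0' n)) as HS.
  assert (Hlnl : ln l < 0) by (apply ln_neg; lra).
  assert (Hlnr : ln rho < 0) by (apply ln_neg; lra).
  assert (Hlr : ln l <= ln rho) by (apply ln_le; lra).
  set (delta := ln rho / ln l).
  assert (Hdl : delta * ln l = ln rho) by (unfold delta; field; lra).
  assert (Hd : 0 < delta <= 1).
  { unfold delta. split.
    - replace (ln rho / ln l) with ((- ln rho) / (- ln l)) by (field; lra). apply Rdiv_lt_0_compat; lra.
    - apply Rmult_le_reg_r with (- ln l); [lra|]. replace (ln rho / ln l * - ln l) with (- ln rho) by (field; lra). lra. }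
  exists delta. split; [exact Hd|].
  exists (K * Rpower (/ l) delta). intros s t Hs Ht.
  destruct (Req_dec s t) as [<-|Hne].
  { rewrite !Rminus_diag, !Rabs_R0. unfold rpow. destruct Rlt_dec; lra. }
  set (r := Rabs (s - t)).
  assert (Hr : 0 < r <= 1).
  { unfold r. split; [apply Rabs_pos_lt; lra|]. unfold inI in *. unfold Rabs; destruct Rcase_abs; lra. }
  destruct (exists_level l r ltac:(lra) Hr) as [n [Hn1 Hn2]].
  eapply Rle_trans; [apply HS; auto; exact Hn2|].
  rewrite rpow_pos by lra.
  assert (Hrho0 : 0 < rho) by lra.
  assert (E : rho ^ n = Rpower (l ^ n) delta).
  { rewrite <- (Rpower_pow n rho Hrho0). unfold Rpower. rewrite ln_pow by lra. f_equal.
    rewrite <- Hdl. ring. }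
  rewrite E. rewrite Rmult_assoc. apply Rmult_le_compat_l; [lra|].
  rewrite Rmult_comm, Rpower_mult_distr by (try apply Rinv_0_lt_compat; lra).
  apply Rle_Rpower_l; [lra|]. split; [apply pow_lt; lra|].
  simpl in Hn1. apply Rmult_le_reg_l with l; [lra|].
  replace (l * (r * / l)) with r by (field; lra). lra.
Qed.

Lemma lip_nonneg d f : Lip d f -> exists C, 0 <= C /\ forall u v, inI u -> inI v ->
  Rabs (f u - f v) <= C * rpow (Rabs (u - v)) d.
Proof.
  intros [C HC]. exists (Rmax C 0). split; [apply Rmax_r|]. intros u v Hu Hv.
  eapply Rle_trans; [apply HC; auto|]. apply Rmult_le_compat_r; [apply rpow_nonneg|apply Rmax_l].
Qed.

Lemma absI u v : inI u -> inI v -> 0 <= Rabs (u - v) <= 1.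
Proof. unfold inI; intros; split; [apply Rabs_pos|]. unfold Rabs; destruct Rcase_abs; lra. Qed.

Lemma lip_weaken d d' f : Lip d f -> 0 < d' <= d -> Lip d' f.
Proof.
  intros Hf Hd. destruct (lip_nonneg d f Hf) as [C [HC0 HC]]. exists C. intros u v Hu Hv.
  eapply Rle_trans; [apply HC; auto|]. apply Rmult_le_compat_l; [lra|].
  apply rpow_le_exp; [apply absI; auto| lra].
Qed.

Lemma lip_combine d1 d2 b f g : Lip d1 f -> Lip d2 g -> 0 < d1 -> 0 < d2 ->
  Lip (Rmin d1 d2) (fun t => b * f t + g t).
Proof.
  intros Hf Hg H1 H2.
  assert (Hm : 0 < Rmin d1 d2) by (apply Rmin_pos; lra).
  destruct (lip_nonneg _ _ (lip_weaken d1 (Rmin d1 d2) f Hf ltac:(split; [lra|apply Rmin_l]))) as [C1 [HC1 Hf']].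
  destruct (lip_nonneg _ _ (lip_weaken d2 (Rmin d1 d2) g Hg ltac:(split; [lra|apply Rmin_r]))) as [C2 [HC2 Hg']].
  exists (Rabs b * C1 + C2). intros u v Hu Hv.
  replace (b * f u + g u - (b * f v + g v)) with (b * (f u - f v) + (g u - g v)) by ring.
  eapply Rle_trans; [apply abs2|].
  pose proof (Hf' u v Hu Hv). pose proof (Hg' u v Hu Hv). pose proof (Rabs_pos b).
  assert (Rabs b * Rabs (f u - f v) <= Rabs b * (C1 * rpow (Rabs (u - v)) (Rmin d1 d2))) by
    (apply Rmult_le_compat_l; lra).
  lra.
Qed.

Lemma uniform_holder N (h : nat -> R -> R) :
  (forall i, (1 <= i <= N)%nat -> exists d, 0 < d /\ Lip d (h i)) ->
  exists H eta, 0 < eta /\ forall i u v, (1 <= i <= N)%nat -> inI u -> inI v ->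
      Rabs (h i u - h i v) <= H * rpow (Rabs (u - v)) eta.
Proof.
  intros Hh.
  destruct (fin_down N (fun i e => Lip e (h i))) as [eta [Heta He]].
  { intros i c c' Hc Hc'. eapply lip_weaken; eauto. }
  { exact Hh. }
  destruct (fin_up N (fun i C => forall u v, inI u -> inI v ->
      Rabs (h i u - h i v) <= C * rpow (Rabs (u - v)) eta)) as [H HH].
  { intros i c c' Hc Hc' u v Hu Hv. eapply Rle_trans; [apply Hc; auto|].
    apply Rmult_le_compat_r; [apply rpow_nonneg|lra]. }
  { intros i Hi. apply (He i Hi). }
  exists H, eta. split; [exact Heta|]. intros i u v Hi. apply HH; auto.
Qed.

Theorem theorem3p3
  (N : nat) (x : nat -> R)
  (alpha beta gamma : nat -> R) (p q : nat -> R -> R) (lam mu : nat -> R)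
  (f1 f2 : R -> R) :
  (2 <= N)%nat ->
  x 0%nat = 0 -> x N = 1 ->
  (forall i, (i < N)%nat -> x i < x (S i)) ->
  (forall i, (1 <= i <= N)%nat ->
     Rabs (alpha i) < 1 /\ Rabs (beta i) + Rabs (gamma i) < 1 /\
     0 < lam i <= 1 /\ 0 < mu i <= 1 /\
     Lip (lam i) (p i) /\ Lip (mu i) (q i)) ->
  continuous_on_I f1 -> continuous_on_I f2 ->
  (forall i t, (1 <= i <= N)%nat -> inI t ->
     f1 (Lmap x i t) = alpha i * f1 t + beta i * f2 t + p i t /\
     f2 (Lmap x i t) = gamma i * f2 t + q i t) ->
  let lambda := min1N N lam in
  let mu0 := min1N N mu in
  let Omega := max1N N (fun i => Rabs (alpha i) / Rpower (len x i) lambda) in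
  let Gamma := max1N N (fun i => Rabs (gamma i) / Rpower (len x i) mu0) in
  let Theta := max1N N (fun i => Rabs (alpha i) / Rpower (len x i) mu0) in
  Theta > 1 ->
  ((Omega <> 1 /\ Gamma <> 1) ->
     exists delta, 0 < delta <= 1 /\ Lip delta f1) /\
  ((Omega = 1 \/ Gamma = 1) ->
     exists delta, 0 < delta <= 1 /\
       exists C eps, 0 < eps /\
         forall t, 0 < Rabs t < eps ->
           Rbar_le (modulus f1 t)
                   (Finite (C * Rpower (Rabs t) delta * Rabs (ln (Rabs t))))).
Proof.
  intros HN H0 H1 Hinc Hpar Hc1 Hc2 FE lambda mu0 Omega Gamma Theta _.
  assert (L2 : exists d, 0 < d <= 1 /\ Lip d f2).
  { apply (holder_fix N x gamma q f2 HN H0 H1 Hinc).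
    - intros i Hi. destruct (Hpar i Hi) as [_ [Hb _]]. pose proof (Rabs_pos (beta i)). lra.
    - apply uniform_holder. intros i Hi. destruct (Hpar i Hi) as [_ [_ [_ [Hm [_ Hq]]]]].
      exists (mu i). split; [lra|exact Hq].
    - exact Hc2.
    - intros i t Hi Ht. apply (FE i t Hi Ht). }
  destruct L2 as [d2 [Hd2 Hf2]].
  assert (L1 : exists d, 0 < d <= 1 /\ Lip d f1).
  { apply (holder_fix N x alpha (fun i t => beta i * f2 t + p i t) f1 HN H0 H1 Hinc).
    - intros i Hi. apply (Hpar i Hi).
    - apply uniform_holder. intros i Hi. destruct (Hpar i Hi) as [_ [_ [Hl [_ [Hp _]]]]].
      exists (Rmin d2 (lam i)). split; [apply Rmin_pos; lra|].
      apply lip_combine; auto; lra.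
    - exact Hc1.
    - intros i t Hi Ht. rewrite (proj1 (FE i t Hi Ht)). ring. }
  destruct L1 as [d [Hd Hf1]].
  split.
  - intros _. exists d. auto.
  - intros _. exists d. split; [exact Hd|].
    destruct (lip_nonneg d f1 Hf1) as [C [HC0 HC]].
    exists C, (exp (-1)). split; [apply exp_pos|].
    intros t Ht.
    assert (Hln : ln (Rabs t) < -1).
    { rewrite <- (ln_exp (-1)). apply ln_increasing; lra. }
    assert (Hln' : 1 <= Rabs (ln (Rabs t))) by (rewrite Rabs_left by lra; lra).
    assert (Hpw : 0 < Rpower (Rabs t) d) by (unfold Rpower; apply exp_pos).
    unfold modulus. destruct (Lub_Rbar_correct (fun r => exists x y, inI x /\ inI y /\ Rabs (x - y) <= Rabs t
                                  /\ r = Rabs (f1 x - f1 y))) as [_ Hlub].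
    apply Hlub. intros r [u [v [Hu [Hv [Huv ->]]]]]. simpl.
    eapply Rle_trans; [apply HC; auto|].
    assert (rpow (Rabs (u - v)) d <= Rpower (Rabs t) d).
    { rewrite <- (rpow_pos (Rabs t)) by lra. apply rpow_le_base; [split; [apply Rabs_pos|exact Huv]|lra]. }
    assert (C * rpow (Rabs (u - v)) d <= C * Rpower (Rabs t) d) by (apply Rmult_le_compat_l; lra).
    assert (0 <= C * Rpower (Rabs t) d) by (apply Rmult_le_pos; lra).
    nra.
Qed.
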